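(* Let $N\ge2$ and $T,\mu>0$. Let $x(t)=(x_1(t),\dots,x_N(t))$, $x_i(t)\in\mathbb{R}$, be a (Carathéodory) solution of $$\dot x_i(t)=\frac1N\sum_{j=1}^N M_{ij}(t)(x_j-x_i),\qquad i=1,\dots,N,$$ with Lebesgue measurable $M_{ij}:[0,+\infty)\to[0,1]$, and let $\alpha:=\min_{j}x_j(0)$. Let $k\ge1$ and assume that the $(T,\mu)$-connectivity graph $G(t)$ contains the directed path $i_0\to i_1\to\dots\to i_k$ for all times $t=0,T,\dots,(k-1)T$. Then for all $t\ge kT$ and all $l\in\{0,\dots,k\}$, $$x_{i_l}(t)\ge\alpha+\eta^k\exp\!\left(-2\tfrac{N-1}{N}t\right)(x_{i_k}(0)-\alpha),\qquad \eta:=\frac{\mu T}{N+\mu T}.$$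
   Context: Given $T,\mu>0$, the $(T,\mu)$-connectivity graph at time $t\ge0$ is the directed graph $G(t)$ on nodes $\{1,\dots,N\}$ in which the arrow $i\to j$ exists iff $\frac1T\int_t^{t+T}M_{ij}(s)\,ds\ge\mu$. *)

(* Defs.v *)
From HB Require Import structures.
From mathcomp Require Import all_boot all_order all_algebra.
From mathcomp Require Import all_classical all_reals all_analysis.
Set Implicit Arguments. Unset Strict Implicit. Unset Printing Implicit Defensive.
Import Order.TTheory GRing.Theory Num.Theory.
Local Open Scope classical_set_scope.
Local Open Scope ring_scope.

Definition rhs {R : realType} {N : nat} (M : 'I_N -> 'I_N -> R -> R)
  (x : 'I_N -> R -> R) (i : 'I_N) (s : R) : R :=
  N%:R^-1 * \sum_(j < N) M i j s * (x j s - x i s).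

(* Caratheodory solution on [0, +oo): for every i and t >= 0, the
   right-hand side is Lebesgue integrable on [0,t] and
   x_i(t) = x_i(0) + int_0^t rhs_i(s) ds  (equivalently: x_i is absolutely
   continuous on compacts and satisfies the ODE almost everywhere). *)
Definition caratheodory_solution {R : realType} {N : nat}
  (M : 'I_N -> 'I_N -> R -> R) (x : 'I_N -> R -> R) : Prop :=
  forall (i : 'I_N) (t : R), 0 <= t ->
    (@lebesgue_measure R).-integrable `[0, t] (fun s => (rhs M x i s)%:E) /\
    x i t = x i 0 + Rintegral (@lebesgue_measure R) `[0, t] (rhs M x i).

Definition conn_arrow {R : realType} {N : nat}
  (M : 'I_N -> 'I_N -> R -> R) (T mu t : R) (i j : 'I_N) : Prop :=
  T^-1 * Rintegral (@lebesgue_measure R) `[t, t + T] (M i j) >= mu.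

(* Main.v *)
Require Import Defs.
From HB Require Import structures.
From mathcomp Require Import all_boot all_order all_algebra.
From mathcomp Require Import all_classical all_reals all_analysis.
From mathcomp Require Import ring lra zify.
Import Order.TTheory GRing.Theory Num.Theory.
Local Open Scope classical_set_scope.
Local Open Scope ring_scope.

Section Aux.
Context {R : realType}.

Definition pcont (f : R -> R) (s t : R) := forall u, s <= u <= t ->
  forall e, 0 < e -> exists2 d, 0 < d &
    forall w, s <= w <= t -> `|w - u| < d -> `|f w - f u| < e.

Lemma pcont_ext f g s t : (forall w, s <= w <= t -> f w = g w) ->
  pcont f s t -> pcont g s t.
Proof.
move=> fg pf u ust e e0; have [d d0 hd] := pf u ust e e0.
exists d => // w wst wu; rewrite -!fg //; exact: hd.
Qed.

Lemma pcont_sub f s t s' t' : s <= s' -> t' <= t -> pcont f s t -> pcont f s' t'.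
Proof.
move=> ss tt pf u /andP[su ut] e e0.
have [|d d0 hd] := pf u _ e e0; first by apply/andP; split; lra.
exists d => // w /andP[sw wt] wu; apply: hd => //; apply/andP; split; lra.
Qed.

Lemma pcont_cst c s t : pcont (fun _ => c) s t.
Proof. by move=> u _ e e0; exists 1 => // w _ _; rewrite subrr normr0. Qed.

Lemma pcontD f g s t : pcont f s t -> pcont g s t -> pcont (fun x => f x + g x) s t.
Proof.
move=> pf pg u ust e e0.
have e20 : 0 < e / 2 by lra.
have [d1 d10 h1] := pf u ust _ e20; have [d2 d20 h2] := pg u ust _ e20.
exists (Num.min d1 d2); first by rewrite lt_min d10 d20.
move=> w wst; rewrite lt_min => /andP[w1 w2].
have := h1 w wst w1; have := h2 w wst w2.
rewrite (_ : f w + g w - (f u + g u) = (f w - f u) + (g w - g u)); last by ring.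
move=> a b; apply: le_lt_trans (ler_normD _ _) _; lra.
Qed.

Lemma pcontN f s t : pcont f s t -> pcont (fun x => - f x) s t.
Proof.
move=> pf u ust e e0; have [d d0 hd] := pf u ust e e0.
by exists d => // w wst wu; rewrite -opprD normrN; exact: hd.
Qed.

Lemma pcontM f g s t : pcont f s t -> pcont g s t -> pcont (fun x => f x * g x) s t.
Proof.
move=> pf pg u ust e e0.
set K := `|f u| + 1; set L := `|g u| + 1.
have K0 : 0 < K by rewrite /K; have := normr_ge0 (f u); lra.
have L0 : 0 < L by rewrite /L; have := normr_ge0 (g u); lra.
have e1 : 0 < Num.min 1 (e / (2 * L)) by rewrite lt_min ltr01 /= divr_gt0 // mulr_gt0.
have e2 : 0 < e / (2 * K) by rewrite divr_gt0 // mulr_gt0.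
have [d1 d10 h1] := pf u ust _ e1; have [d2 d20 h2] := pg u ust _ e2.
exists (Num.min d1 d2); first by rewrite lt_min d10 d20.
move=> w wst; rewrite lt_min => /andP[w1 w2].
have hf := h1 w wst w1; have hg := h2 w wst w2.
move: hf; rewrite lt_min => /andP[hf1 hf2].
rewrite (_ : f w * g w - f u * g u = f w * (g w - g u) + (f w - f u) * g u); last by ring.
apply: le_lt_trans (ler_normD _ _) _; rewrite !normrM.
have fwK : `|f w| <= K.
  rewrite /K; have := ler_distD (f u) (f w) 0; rewrite !subr0 => h.
  have : `|f w - f u| = `|f u - f w| by rewrite distrC.
  lra.
have A1 : `|f w| * `|g w - g u| <= K * (e / (2 * K)).
  apply: ler_pM => //; exact: ltW.
have A2 : `|f w - f u| * `|g u| < (e / (2 * L)) * L.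
  apply: (@le_lt_trans _ _ (`|f w - f u| * L)).
    by apply: ler_wpM2l => //; rewrite /L; lra.
  by rewrite ltr_pM2r.
have E1 : K * (e / (2 * K)) = e / 2 by field; lra.
have E2 : (e / (2 * L)) * L = e / 2 by field; lra.
  lra.
Qed.

Lemma pcont_exp (a t0 s t : R) : 0 <= a -> t0 <= s ->
  pcont (fun w => expR (- a * (w - t0))) s t.
Proof.
move=> a0 ts u /andP[su ut] e e0.
have key : forall v w, t0 <= v -> v <= w ->
    `|expR (- a * (w - t0)) - expR (- a * (v - t0))| <= a * (w - v).
  move=> v w tv vw.
  have ew : expR (- a * (w - t0)) = expR (- a * (v - t0)) * expR (- a * (w - v)).
    by rewrite -expRD; congr expR; ring.
  have le1 : expR (- a * (v - t0)) <= 1 by rewrite expR_le1; nra.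
  have le2 : expR (- a * (w - v)) <= 1 by rewrite expR_le1; nra.
  have g1 := expR_ge1Dx (- a * (w - v)).
  have p1 := expR_gt0 (- a * (v - t0)).
  rewrite ew ler0_norm; last by nra.
  nra.
have [->|apos] := eqVneq a 0.
  by exists 1 => // w _ _; rewrite oppr0 !mul0r subrr normr0.
have a0' : 0 < a by rewrite lt_neqAle eq_sym apos.
exists (e / a); first by rewrite divr_gt0.
have ea : a * (e / a) = e by field; rewrite gt_eqF.
move=> w /andP[sw wt] wu.
have [uw|wu'] := leP u w.
  apply: le_lt_trans (key u w _ _) _; try lra.
  move: wu; rewrite ger0_norm; last lra.
  by move=> h; rewrite -[X in _ < X]ea ltr_pM2l.
rewrite distrC; apply: le_lt_trans (key w u _ _) _; try lra.
move: wu; rewrite ler0_norm; last lra.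
by move=> h; rewrite -[X in _ < X]ea ltr_pM2l // -opprB.
Qed.

End Aux.

Lemma pcont_id {R : realType} (s t : R) : pcont (fun w => w) s t.
Proof. by move=> u _ e e0; exists e. Qed.

Section Barrier.
Context {R : realType}.

Lemma barrier (I : finType) (phi : I -> R -> R) (s t : R) :
  s <= t -> (forall j, pcont (phi j) s t) -> (forall j, 0 < phi j s) ->
  (forall i u, s < u -> u <= t -> phi i u = 0 ->
     (forall j v, s <= v -> v < u -> 0 < phi j v) ->
     (forall j, 0 <= phi j u) -> False) ->
  forall j u, s <= u -> u <= t -> 0 < phi j u.
Proof.
move=> st pc p0 H j0 u0 su0 u0t; rewrite ltNge; apply/negP => hneg.
pose A := [set v | s <= v /\ v <= t /\ exists j, phi j v <= 0].
have Au0 : A u0 by split => //; split => //; exists j0.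
have lbA : lbound A s by move=> v [].
have hlA : has_lbound A by exists s.
pose z := inf A.
have sz : s <= z by apply: lb_le_inf => //; exists u0.
have zu0 : z <= u0 by exact: ge_inf.
have P1 : forall j v, s <= v -> v < z -> 0 < phi j v.
  move=> j v sv vz; rewrite ltNge; apply/negP => hv.
  have : z <= v by apply: ge_inf => //; split => //; split; [lra|exists j].
  lra.
have P2 : forall j, 0 <= phi j z.
  move=> j; rewrite leNgt; apply/negP => hz.
  have hzt : s <= z <= t by apply/andP; split; lra.
  have hz' : 0 < - phi j z by lra.
  have [d d0 hd] := pc j z hzt (- phi j z) hz'.
  have [sz'|zs] := eqVneq s z.
    by have := p0 j; rewrite sz'; lra.
  have sz2 : s < z by rewrite lt_neqAle zs sz.
  pose v := Num.max s (z - d / 2).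
  have sv : s <= v by rewrite le_max lexx.
  have vz : v < z by rewrite gt_max sz2 /=; lra.
  have vd : z - d / 2 <= v by rewrite le_max lexx orbT.
  have := hd v _ _.
  have := P1 j v sv vz.
  move=> h1 h2; have : `|v - z| < d by rewrite ltr0_norm; lra.
  move=> /(h2 _)-/(_ _) h3.
  have : s <= v <= t by apply/andP; split; lra.
  move=> /h3; rewrite ltr_norml; lra.
have P3 : exists i, phi i z <= 0.
  apply/not_existsP => hall.
  have pos : forall i, 0 < phi i z by move=> i; rewrite ltNge; apply/negP => /(hall i).
  have hd : forall i, exists d, 0 < d /\ forall w, s <= w <= t -> `|w - z| < d ->
      `|phi i w - phi i z| < phi i z.
    move=> i; have hzt : s <= z <= t by apply/andP; split; lra.
    have [d d0 h] := pc i z hzt (phi i z) (pos i).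
    by exists d.
  have [df hdf] := choice hd.
  pose d := \big[Num.min/1]_i df i.
  have d0 : 0 < d.
    rewrite /d; elim/big_ind: _ => [|x y x0 y0|i _].
    - exact: ltr01.
    - by rewrite lt_min x0 y0.
    - by case: (hdf i).
  have dle : forall i, d <= df i.
    by move=> i; rewrite /d (bigD1 i) //= ge_min lexx.
  have : z + d <= z.
    apply: lb_le_inf; first by exists u0.
    move=> a [sa [aat [i hai]]].
    rewrite leNgt; apply/negP => ha.
    have za : z <= a by apply: (ge_inf hlA); split => //; split => //; exists i.
    case: (hdf i) => _ /(_ a) h.
    have : `|a - z| < df i by rewrite ger0_norm; [have := dle i; lra|lra].
    move=> /(h _) /=.
    have : s <= a <= t by apply/andP.
    move=> /[swap] /[apply]; rewrite ltr_norml; lra.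
  lra.
case: P3 => i hi.
have piz : phi i z = 0 by apply/le_anti; rewrite hi P2.
have [sz'|zs] := eqVneq s z.
  by have := p0 i; rewrite sz' piz ltxx.
have sz2 : s < z by rewrite lt_neqAle zs sz.
apply: (H i z sz2 _ piz P1 P2); lra.
Qed.

End Barrier.
Module IntHelpers.
Import numFieldNormedType.Exports.

Section Int.
Context {R : realType}.
Notation mu := (@lebesgue_measure R).

Lemma int_bdd (F : R -> R) (A : set R) (K : R) :
  measurable A -> (mu A < +oo)%E -> measurable_fun A F ->
  (forall x, A x -> `|F x| <= K) -> mu.-integrable A (EFin \o F).
Proof.
move=> mA Afin mF hK; apply: measurable_bounded_integrable => //.
exists K; split; first exact: num_real.
by move=> M KM x Ax; apply: le_trans (hK x Ax) (ltW KM).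
Qed.

Lemma int_cst (c v u : R) : mu.-integrable `]v, u] (EFin \o (fun=> c)).
Proof.
apply: (@int_bdd _ _ `|c|) => //.
by rewrite lebesgue_measure_itv /=; case: ifP => _; rewrite -?EFinB ?ltry.
Qed.

Lemma intZ (G : R -> R) c (A : set R) : measurable A ->
  mu.-integrable A (EFin \o G) -> mu.-integrable A (EFin \o (fun w => c * G w)).
Proof.
move=> mA iG.
have h := @eq_integrable _ _ _ mu A mA.
apply: (h (fun x => (c%:E * (EFin \o G) x)%E)).
- by move=> x _ /=; rewrite EFinM.
- exact: integrableZl.
Qed.

Lemma intD (F G : R -> R) (A : set R) : measurable A ->
  mu.-integrable A (EFin \o F) -> mu.-integrable A (EFin \o G) ->
  mu.-integrable A (EFin \o (fun w => F w + G w)).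
Proof.
move=> mA iF iG.
have h := @eq_integrable _ _ _ mu A mA.
apply: (h ((EFin \o F) \+ (EFin \o G))%E).
- by move=> x _ /=.
- exact: integrableD.
Qed.

Lemma int_incr (F : R -> R) v u : 0 <= v -> v <= u ->
  mu.-integrable `[0, u] (EFin \o F) ->
  Rintegral mu `[0, u] F - Rintegral mu `[0, v] F = Rintegral mu `]v, u] F.
Proof. by move=> v0 vu itf; apply: Rintegral_itvB; rewrite // bnd_simp. Qed.

Lemma int_lb (F G : R -> R) c1 c2 v u : v <= u ->
  mu.-integrable `]v, u] (EFin \o F) -> mu.-integrable `]v, u] (EFin \o G) ->
  (forall w, v < w <= u -> c1 * G w + c2 <= F w) ->
  c1 * Rintegral mu `]v, u] G + c2 * (u - v) <= Rintegral mu `]v, u] F.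
Proof.
move=> vu iF iG h.
have iG1 : mu.-integrable `]v, u] (EFin \o (fun w => c1 * G w)).
  exact: intZ.
have iH : mu.-integrable `]v, u] (EFin \o (fun w => c1 * G w + c2)).
  exact: (@intD (fun w => c1 * G w) (fun=> c2) _ (measurable_itv _) iG1 (int_cst c2 v u)).
have -> : c1 * Rintegral mu `]v, u] G + c2 * (u - v) =
    Rintegral mu `]v, u] (fun w => c1 * G w + c2).
  rewrite RintegralD //=; last exact: int_cst.
  rewrite RintegralZl // Rintegral_cst //; congr (_ + c2 * _).
  have := @lebesgue_measure_itv R (Interval (BRight v) (BRight u)).
  rewrite /= => ->.
  rewrite lte_fin; have [vu'|uv] := ltP v u; first by rewrite -EFinD.
  rewrite /=; lra.
apply: le_Rintegral => //.
Qed.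

Lemma int_cont (F : R -> R) (t : R) : 0 <= t -> mu.-integrable `[0, t] (EFin \o F) ->
  pcont (fun x => Rintegral mu `[0, x] F) 0 t.
Proof.
move=> t0 itf u /andP[u0 ut] e e0.
have itg : mu.-integrable setT (EFin \o (F \_ (`[0, t] : set R))).
  by rewrite -restrict_EFin; apply/integrable_restrict => //=; rewrite setTI.
have [d [d0 hd]] := integral_normr_continuous itg e0.
have claim : forall v w, 0 <= v -> v <= w -> w <= t -> w - v < d ->
    `|Rintegral mu `[0, w] F - Rintegral mu `[0, v] F| < e.
  move=> v w v0 vw wt wv.
  have iw : mu.-integrable `[0, w] (EFin \o F).
    apply: integrableS itf => //; apply: subset_itvl; rewrite bnd_simp //.
  rewrite int_incr //.
  have ivw : mu.-integrable `]v, w] (EFin \o F).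
    apply: integrableS itf => //; apply: subset_itv; rewrite bnd_simp //.
  apply: le_lt_trans (le_normr_Rintegral _ ivw) _ => //.
  rewrite (_ : Rintegral mu `]v, w] (fun t => `|F t|) =
      Rintegral mu `]v, w] (fun x => `|(F \_ (`[0, t] : set R)) x|)).
    apply: hd => //.
    have := @lebesgue_measure_itv R (Interval (BRight v) (BRight w)); rewrite /= => ->.
    rewrite lte_fin; have [vw1|wv1] := ltP v w; last by rewrite lte_fin.
    by rewrite -EFinB lte_fin.
  apply: eq_Rintegral => x; rewrite inE /= in_itv /= => /andP[vx xw].
  rewrite patchE ifT // inE /= in_itv /=; apply/andP; split; lra.
exists d => // w /andP[w0 wt] wu.
have [uw|wu'] := leP u w.
  apply: claim => //; move: wu; rewrite ger0_norm; lra.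
rewrite distrC; apply: claim => //; try lra.
move: wu; rewrite ler0_norm; lra.
Qed.

End Int.

End IntHelpers.
Import IntHelpers.

Section Cmp.
Context {R : realType}.

Lemma le_eps (x y : R) : (forall eps, 0 < eps -> x - eps < y) -> x <= y.
Proof.
move=> h; rewrite leNgt; apply/negP => yx.
have := h ((x - y) / 2); lra.
Qed.

Lemma cmp (y H : R -> R) (a t0 t1 : R) : 0 < a -> t0 <= t1 ->
  pcont y t0 t1 -> pcont H t0 t1 -> H t0 <= y t0 ->
  (forall w, t0 <= w -> w <= t1 -> 0 <= H w) ->
  (forall v u B, t0 <= v -> v <= u -> u <= t1 ->
     (forall w, v <= w -> w <= u -> y w <= B) ->
     expR (- a * (u - t0)) * (H u - H v) - a * B * (u - v) <= y u - y v) ->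
  forall t, t0 <= t -> t <= t1 -> expR (- a * (t - t0)) * H t <= y t.
Proof.
move=> a0 t01 py pH Hy0 H0 hinc t tt0 tt1.
apply: le_eps => eps eps0.
pose e := fun w => expR (- a * (w - t0)).
pose phi := fun (_ : unit) w => y w + - (e w * H w) + eps.
have pphi : forall j, pcont (phi j) t0 t1.
  move=> j; apply: pcontD; last exact: pcont_cst.
  apply: pcontD => //; apply: pcontN; apply: pcontM => //.
  by apply: pcont_exp; lra.
have e0 : e t0 = 1 by rewrite /e subrr mulr0 expR0.
suff key : 0 < phi tt t by rewrite /phi /e in key; lra.
apply: (@barrier R unit phi t0 t1 t01 pphi) => //.
  by move=> []; rewrite /phi e0 mul1r; lra.
move=> [] u t0u ut1 phu P1 P2.
have ust : t0 <= u <= t1 by apply/andP; split; lra.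
have eps3 : 0 < eps / 3 by lra.
have [d1 d10 hd1] := py u ust _ eps3.
have [d2 d20 hd2] := pH u ust _ eps3.
pose d := Num.min d1 d2.
have d0 : 0 < d by rewrite lt_min d10 d20.
have dd1 : d <= d1 by rewrite ge_min lexx.
have dd2 : d <= d2 by rewrite ge_min lexx orbT.
pose v := Num.max t0 (u - d / 2).
have t0v : t0 <= v by rewrite le_max lexx.
have vu : v < u by rewrite gt_max t0u /=; lra.
have vd : u - d / 2 <= v by rewrite le_max lexx orbT.
have hB : forall w, v <= w -> w <= u -> y w <= y u + eps / 3.
  move=> w vw wu.
  have wst : t0 <= w <= t1 by apply/andP; split; lra.
  have := hd1 w wst; rewrite ler0_norm; last lra.
  move=> /(_ _) h; have := h ltac:(lra); rewrite ltr_norml; lra.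
have hHv : H u - eps / 3 < H v.
  have vst : t0 <= v <= t1 by apply/andP; split; lra.
  have := hd2 v vst; rewrite ler0_norm; last lra.
  move=> /(_ _) h; have := h ltac:(lra); rewrite ltr_norml; lra.
have I1 := hinc v u (y u + eps / 3) t0v (ltW vu) ut1 hB.
have P1v := P1 tt v t0v vu.
rewrite /phi /e /= in phu P1v.
set eu := expR (- a * (u - t0)) in I1 phu.
set ev := expR (- a * (v - t0)) in P1v.
have eu0 : 0 < eu by exact: expR_gt0.
have eu1 : eu <= 1 by rewrite /eu expR_le1; nra.
have evu : eu * (1 + a * (u - v)) <= ev.
  have -> : ev = eu * expR (a * (u - v)) by rewrite /ev /eu -expRD; congr expR; ring.
  by rewrite ler_pM2l // expR_ge1Dx.
have Hv0 : 0 <= H v by apply: H0; lra.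
have h1 : H v * (eu * (a * (u - v))) <= H v * (ev - eu).
  by apply: ler_wpM2l => //; lra.
have h2 : eu * H u - eps / 3 <= eu * H v.
  have : eu * (H u - eps / 3) <= eu * H v by apply: ler_wpM2l; lra.
  have : eu * (eps / 3) <= eps / 3 by rewrite ler_piMl //; lra.
  lra.
have h3 : 0 < a * (u - v) * (eu * H v - (y u + eps / 3)).
  apply: mulr_gt0; first by apply: mulr_gt0 => //; lra.
  lra.
have E : H v * (eu * (a * (u - v))) = a * (u - v) * (eu * H v) by ring.
have E2 : a * (u - v) * (eu * H v - (y u + eps / 3)) =
  a * (u - v) * (eu * H v) - a * (y u + eps / 3) * (u - v) by ring.
lra.
Qed.

End Cmp.

Section Main.
Context {R : realType} (N : nat) (M : 'I_N -> 'I_N -> R -> R)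
  (x : 'I_N -> R -> R) (alpha : R).
Notation mu := (@lebesgue_measure R).
Hypothesis hN : (2 <= N)%N.
Hypothesis hmeas : forall i j, measurable_fun `[(0:R), +oo[ (M i j).
Hypothesis hM01 : forall i j s, 0 <= s -> 0 <= M i j s <= 1.
Hypothesis hsol : caratheodory_solution M x.
Hypothesis halpha : forall j, alpha <= x j 0.

Let y j t := x j t - alpha.
Let f i := rhs M x i.
Let a : R := (N%:R - 1) / N%:R.

Lemma N_gt0 : 0 < N%:R :> R.
Proof. by rewrite ltr0n; case: N hN. Qed.

Lemma N_ge2 : 2 <= N%:R :> R.
Proof. by rewrite (ler_nat R 2 N). Qed.

Lemma a_gt0 : 0 < a.
Proof. rewrite /a divr_gt0 ?N_gt0 //; have := N_ge2; lra. Qed.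

Lemma itv_fin b1 b2 (v u : R) :
  (mu [set` Interval (BSide b1 v) (BSide b2 u)] < +oo)%E.
Proof.
have := @lebesgue_measure_itv R (Interval (BSide b1 v) (BSide b2 u)).
by rewrite /= => ->; case: ifP => _; rewrite -?EFinB ?ltry.
Qed.

Lemma M_int_sub i j (A : set R) : measurable A -> (mu A < +oo)%E ->
  A `<=` `[0, +oo[ -> mu.-integrable A (EFin \o M i j).
Proof.
move=> mA Af AS; apply: (@int_bdd _ _ _ 1) => //.
  exact: (measurable_funS _ AS (hmeas i j)).
move=> s As; have := AS s As; rewrite /= in_itv /= andbT => s0.
by case/andP: (hM01 i j s s0) => m0 m1; rewrite ger0_norm.
Qed.

Lemma M_int_oc i j (v u : R) : 0 <= v -> mu.-integrable `]v, u] (EFin \o M i j).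
Proof.
move=> v0; apply: M_int_sub => //; first exact: itv_fin.
by apply: subset_itv; rewrite bnd_simp.
Qed.

Lemma M_int_cc i j (u : R) : mu.-integrable `[0, u] (EFin \o M i j).
Proof.
apply: M_int_sub => //; first exact: itv_fin.
by apply: subset_itv; rewrite bnd_simp.
Qed.

Lemma f_int i (t : R) : 0 <= t -> mu.-integrable `[0, t] (EFin \o f i).
Proof. by move=> t0; case: (hsol i t t0). Qed.

Lemma f_int_oc i (v u : R) : 0 <= v -> mu.-integrable `]v, u] (EFin \o f i).
Proof.
move=> v0; have hu : 0 <= Num.max u v by rewrite le_max v0 orbT.
apply: integrableS (f_int i _ hu) => //.
by apply: subset_itv; rewrite bnd_simp // le_max lexx.
Qed.

Lemma y_incr i (v u : R) : 0 <= v -> v <= u ->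
  y i u - y i v = Rintegral mu `]v, u] (f i).
Proof.
move=> v0 vu; have u0 : 0 <= u by lra.
rewrite /y (proj2 (hsol i u u0)) (proj2 (hsol i v v0)).
rewrite -(@int_incr _ (f i) v u v0 vu (f_int i u u0)) /f; ring.
Qed.

Lemma y_cont i (t : R) : 0 <= t -> pcont (y i) 0 t.
Proof.
move=> t0.
apply: (@pcont_ext _ (fun w => (x i 0 - alpha) + Rintegral mu `[0, w] (f i))).
  move=> w /andP[w0 _]; rewrite /y (proj2 (hsol i w w0)) /f; ring.
apply: pcontD; first exact: pcont_cst.
exact: (@int_cont _ (f i) t t0 (f_int i t t0)).
Qed.

Lemma f_y i s : f i s = N%:R^-1 * \sum_(j < N) M i j s * (y j s - y i s).
Proof.
rewrite /f /rhs; congr (_ * _); apply: eq_bigr => j _; rewrite /y; congr (_ * _).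
ring.
Qed.

Lemma sum_delta (j : 'I_N) (c : R) : \sum_(j' < N) (j' == j)%:R * c = c.
Proof.
rewrite (bigD1 j) //= eqxx mul1r big1 ?addr0 // => j' /negbTE ->.
by rewrite mul0r.
Qed.

Lemma sum_cst (c : R) : \sum_(j' < N) c = c *+ N.
Proof. by rewrite sumr_const card_ord. Qed.

Lemma PW_A i (s d : R) : 0 <= s -> 0 <= d -> (forall j, - d <= y j s - y i s) ->
  - d <= f i s.
Proof.
move=> s0 d0 h; rewrite f_y.
have : \sum_(j < N) (- d) <= \sum_(j < N) M i j s * (y j s - y i s).
  apply: ler_sum => j _; have := h j; have := hM01 i j s s0; case/andP => m0 m1.
  nra.
rewrite sum_cst => hs.
have N0 := N_gt0.
have -> : - d = N%:R^-1 * (- d *+ N) by rewrite -mulr_natr; field; lra.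
by apply: ler_wpM2l => //; rewrite invr_ge0 ltW.
Qed.

Lemma PW_B i (s : R) : 0 <= s -> (forall j, 0 <= y j s) -> - (a * y i s) <= f i s.
Proof.
move=> s0 h; rewrite f_y.
have : \sum_(j < N) (- y i s + (j == i)%:R * y i s) <=
    \sum_(j < N) M i j s * (y j s - y i s).
  apply: ler_sum => j _; have := hM01 i j s s0; case/andP => m0 m1.
  have := h j; have := h i.
  have [->|ji] := eqVneq j i.
    by rewrite /= ?mulr1n ?mul1r subrr mulr0; lra.
  rewrite /= ?mulr0n ?mul0r; nra.
rewrite big_split /= sum_cst sum_delta => hs.
have N0 := N_gt0.
have -> : - (a * y i s) = N%:R^-1 * (- y i s *+ N + y i s).
  by rewrite /a -mulr_natr; field; lra.
by apply: ler_wpM2l => //; rewrite invr_ge0 ltW.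
Qed.

Lemma PW_C i j (s : R) : j != i -> 0 <= s -> (forall j, 0 <= y j s) ->
  N%:R^-1 * M i j s * y j s - a * y i s <= f i s.
Proof.
move=> ji s0 h; rewrite f_y.
have : \sum_(j' < N) ((j' == j)%:R * (M i j s * y j s) +
        (- y i s + (j' == i)%:R * y i s)) <=
    \sum_(j' < N) M i j' s * (y j' s - y i s).
  apply: ler_sum => j' _; have := h j'; have := h i; have := hM01 i j' s s0.
  have [->|j'i] := eqVneq j' i.
    have ij : (i == j) = false by rewrite eq_sym; exact: negbTE.
    by rewrite ij /= ?mulr0n ?mulr1n ?mul0r ?mul1r subrr mulr0; lra.
  have [->|j'j] := eqVneq j' j.
    rewrite /= ?mulr0n ?mulr1n ?mul0r ?mul1r => /andP[m0 m1]; nra.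
  rewrite /= ?mulr0n ?mul0r => /andP[m0 m1]; nra.
rewrite big_split /= big_split /= sum_cst !sum_delta => hs.
have N0 := N_gt0.
have -> : N%:R^-1 * M i j s * y j s - a * y i s =
    N%:R^-1 * (M i j s * y j s + (- y i s *+ N + y i s)).
  by rewrite /a -mulr_natr; field; lra.
by apply: ler_wpM2l => //; rewrite invr_ge0 ltW.
Qed.


Lemma y_nonneg j (t : R) : 0 <= t -> 0 <= y j t.
Proof.
move=> t0.
suff h : forall eps, 0 < eps -> - eps < y j t.
  rewrite leNgt; apply/negP => hy; have := h (- y j t / 2); lra.
move=> eps eps0.
have ht1 : 1 + t != 0 by apply/negP => /eqP; lra.
pose ep := eps / (1 + t).
have ep0 : 0 < ep by rewrite /ep divr_gt0 //; lra.
have epE : ep * (1 + t) = eps by rewrite /ep divfK.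
pose phi := fun (j : 'I_N) (w : R) => y j w + ep * (1 + w).
suff : 0 < phi j t by rewrite /phi epE; lra.
apply: (@barrier R _ phi 0 t t0) => //.
- move=> j'; apply: pcontD; first exact: y_cont.
  apply: pcontM; first exact: pcont_cst.
  by apply: pcontD; [exact: pcont_cst | exact: pcont_id].
- move=> j'; rewrite /phi /y addr0 mulr1; have := halpha j'; lra.
move=> i u u0 ut phu P1 P2.
have ust : 0 <= u <= t by apply/andP; split; lra.
have e2 : 0 < ep / 2 by lra.
have [d d0 hd] := y_cont i t t0 u ust _ e2.
pose v := Num.max 0 (u - d / 2).
have v0 : 0 <= v by rewrite le_max lexx.
have vu : v < u by rewrite gt_max u0 /=; lra.
have vd : u - d / 2 <= v by rewrite le_max lexx orbT.
rewrite /phi in phu.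
have hinc := y_incr i v u v0 (ltW vu).
have lb : - (ep / 2) * (u - v) <= Rintegral mu `]v, u] (f i).
  have := @int_lb R (f i) (f i) 0 (- (ep / 2)) v u (ltW vu)
    (f_int_oc i v u v0) (f_int_oc i v u v0).
  rewrite mul0r add0r; apply => w /andP[vw wu].
  rewrite mul0r add0r; apply: PW_A; [lra|lra|] => j'.
  have yjw : - (ep * (1 + w)) <= y j' w.
    have [wu'|uw] := ltP w u.
      by have := P1 j' w ltac:(lra) wu'; rewrite /phi; lra.
    have -> : w = u by lra.
    by have := P2 j'; rewrite /phi; lra.
  have yiw : y i w <= y i u + ep / 2.
    have wst : 0 <= w <= t by apply/andP; split; lra.
    have := hd w wst; rewrite ler0_norm; last lra.
    move=> /(_ _) hh; have := hh ltac:(lra); rewrite ltr_norml; lra.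
  have E : ep * (1 + u) - ep * (1 + w) = ep * (u - w) by ring.
  have : 0 <= ep * (u - w) by apply: mulr_ge0; lra.
  lra.
have P1v := P1 i v v0 vu; rewrite /phi in P1v.
have E2 : ep * (1 + u) - ep * (1 + v) = ep * (u - v) by ring.
have E3 : - (ep / 2) * (u - v) = - (ep * (u - v)) / 2 by ring.
have : 0 < ep * (u - v) by apply: mulr_gt0; lra.
lra.
Qed.

Lemma decay i (s t : R) : 0 <= s -> s <= t ->
  expR (- a * (t - s)) * y i s <= y i t.
Proof.
move=> s0 st.
apply: (@cmp R (y i) (fun _ => y i s) a s t a_gt0 st _ _ _ _ _ t st (lexx t)).
- apply: (@pcont_sub R _ 0 t s t s0 (lexx t)); apply: y_cont; lra.
- exact: pcont_cst.
- exact: lexx.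
- move=> w sw wt; apply: y_nonneg; lra.
move=> v u B sv vu ut hB; rewrite subrr mulr0 sub0r.
rewrite y_incr; [|lra|lra].
have -> : - (a * B * (u - v)) = 0 * Rintegral mu `]v, u] (f i) + - (a * B) * (u - v).
  by rewrite mul0r add0r; ring.
have v0 : 0 <= v by lra.
apply: (@int_lb R (f i) (f i) 0 (- (a * B)) v u vu (f_int_oc i v u v0) (f_int_oc i v u v0)).
move=> w /andP[vw wu]; rewrite mul0r add0r.
apply: le_trans (PW_B i w _ _); last by move=> j'; apply: y_nonneg; lra.
  rewrite lerN2; apply: ler_wpM2l; first exact: ltW a_gt0.
  apply: hB; lra.
lra.
Qed.

Lemma pull i j (t0 T c : R) : j != i -> 0 <= t0 -> 0 <= T ->
  c <= Rintegral mu `[t0, t0 + T] (M i j) ->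
  expR (- a * T) * (N%:R^-1 * y j t0 * c) <= y i (t0 + T).
Proof.
move=> ji t00 T0 hc.
pose G := fun w => Rintegral mu `[0, w] (M i j).
pose H := fun w => N%:R^-1 * y j t0 * (G w - G t0).
have Y0 : 0 <= y j t0 := y_nonneg j t0 t00.
have Ni0 : 0 <= N%:R^-1 :> R by rewrite invr_ge0 ltW // N_gt0.
have Gi : forall v u, 0 <= v -> v <= u -> G u - G v = Rintegral mu `]v, u] (M i j).
  by move=> v u v0 vu; exact: (@int_incr _ (M i j) v u v0 vu (M_int_cc i j u)).
have key : expR (- a * (t0 + T - t0)) * H (t0 + T) <= y i (t0 + T).
  apply: (@cmp R (y i) H a t0 (t0 + T) a_gt0 _ _ _ _ _ _ (t0 + T) _ (lexx _)); try lra.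
  - apply: (@pcont_sub R _ 0 (t0 + T) t0 (t0 + T) t00 (lexx _)); apply: y_cont; lra.
  - apply: pcontM; first exact: pcont_cst.
    apply: pcontD; last exact: pcont_cst.
    apply: (@pcont_sub R _ 0 (t0 + T) t0 (t0 + T) t00 (lexx _)).
    by apply: (@int_cont _ (M i j) (t0 + T)); [lra | exact: M_int_cc].
  - by rewrite /H subrr mulr0; apply: y_nonneg.
  - move=> w tw wT; rewrite /H; apply: mulr_ge0; first exact: mulr_ge0.
    rewrite Gi //; apply: Rintegral_ge0 => s; rewrite /= in_itv /= => /andP[ts _].
    by have /andP[] := hM01 i j s ltac:(lra).
  move=> v u B tv vu ut hB.
  have -> : H u - H v = N%:R^-1 * y j t0 * (G u - G v) by rewrite /H; ring.
  rewrite Gi; [|lra|lra].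
  rewrite y_incr; [|lra|lra].
  set eu := expR (- a * (u - t0)).
  have -> : eu * (N%:R^-1 * y j t0 * Rintegral mu `]v, u] (M i j)) - a * B * (u - v)
      = (eu * (N%:R^-1 * y j t0)) * Rintegral mu `]v, u] (M i j) + - (a * B) * (u - v).
    by ring.
  apply: (@int_lb R (f i) (M i j)); first exact: vu.
  + apply: f_int_oc; lra.
  + apply: M_int_oc; lra.
  move=> w /andP[vw wu].
  have w0 : 0 <= w by lra.
  have hP := PW_C i j w ji w0 (fun j' => y_nonneg j' w w0).
  have hyj : eu * y j t0 <= y j w.
    apply: le_trans (decay j t0 w t00 _); last lra.
    apply: ler_wpM2r => //; rewrite ler_expR.
    have := a_gt0; nra.
  have hm : 0 <= N%:R^-1 * M i j w.
    by apply: mulr_ge0 => //; have /andP[] := hM01 i j w w0.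
  have h1 : N%:R^-1 * M i j w * (eu * y j t0) <= N%:R^-1 * M i j w * y j w.
    exact: ler_wpM2l.
  have h2 : a * y i w <= a * B.
    by apply: ler_wpM2l; [exact: ltW a_gt0 | apply: hB; lra].
  have E : eu * (N%:R^-1 * y j t0) * M i j w = N%:R^-1 * M i j w * (eu * y j t0) by ring.
  lra.
have E1 : - a * (t0 + T - t0) = - a * T by ring.
rewrite E1 in key.
apply: le_trans key; apply: ler_wpM2l; first exact: expR_ge0.
rewrite /H Gi; [|lra|lra].
rewrite Rintegral_itv_obnd_cbnd; last by apply: M_int_oc.
by apply: ler_wpM2l => //; exact: mulr_ge0.
Qed.


Lemma main_sec (T mu : R) (k : nat) (p : 'I_k.+1 -> 'I_N) :
  0 < T -> 0 < mu -> (1 <= k)%N -> injective p ->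
  (forall (m : nat) (l : 'I_k.+1), (m < k)%N -> (l < k)%N ->
     conn_arrow M T mu (m%:R * T) (p l) (p (inord l.+1))) ->
  forall t : R, k%:R * T <= t -> forall l : 'I_k.+1,
    x (p l) t >= alpha + (mu * T / (N%:R + mu * T)) ^+ k
                 * expR (- 2 * ((N%:R - 1) / N%:R) * t)
                 * (x (p ord_max) 0 - alpha).
Proof.
move=> T0 mu0 k1 pinj harr t tk l.
have N0 := N_gt0.
have Ni0 : 0 <= N%:R^-1 :> R by rewrite invr_ge0 ltW.
pose e0 := mu * T / N%:R.
pose Y0 := y (p ord_max) 0.
have Y00 : 0 <= Y0 by rewrite /Y0 /y; have := halpha (p ord_max); lra.
have chain : forall m, (m <= k)%N ->
    expR (- a * (m%:R * T)) * e0 ^+ m * Y0 <= y (p (inord (k - m))) (m%:R * T).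
  elim=> [|m IH] mk.
    rewrite subn0 mulr0n mul0r mulr0 expR0 expr0 !mul1r.
    have -> : (inord k : 'I_k.+1) = ord_max by apply: val_inj; rewrite /= inordK.
    by [].
  pose l' := (inord (k - m.+1) : 'I_k.+1).
  have lv : (l' : nat) = (k - m.+1)%N by rewrite /l' inordK //; lia.
  have hl : (l' < k)%N by rewrite lv; lia.
  have harr' := harr m l' mk hl.
  have nxt : (inord l'.+1 : 'I_k.+1) = inord (k - m) by congr inord; rewrite lv; lia.
  rewrite nxt /conn_arrow in harr'.
  set I := Rintegral _ _ _ in harr'.
  have hc : mu * T <= I.
    have := ler_wpM2r (ltW T0) harr'.
    by rewrite mulrAC mulVf ?mul1r // gt_eqF.
  have ji : p (inord (k - m)) != p l'.
    apply/eqP => /pinj /(congr1 val); rewrite /= inordK ?lv; lia.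
  have mT0 : 0 <= m%:R * T by apply: mulr_ge0 => //; exact: ltW.
  have hp := pull (p l') (p (inord (k - m))) (m%:R * T) T (mu * T) ji mT0 (ltW T0) hc.
  have IH' := IH (ltnW mk).
  have -> : (m.+1)%:R * T = m%:R * T + T by rewrite -addn1 natrD mulrDl mul1r.
  apply: le_trans hp.
  have -> : expR (- a * (m%:R * T + T)) * e0 ^+ m.+1 * Y0 =
      expR (- a * T) * (N%:R^-1 * (expR (- a * (m%:R * T)) * e0 ^+ m * Y0) * (mu * T)).
    rewrite exprS /e0 (_ : - a * (m%:R * T + T) = - a * (m%:R * T) + - a * T); last by ring.
    rewrite expRD; ring.
  apply: ler_wpM2l; first exact: expR_ge0.
  apply: ler_wpM2r; first by apply: mulr_ge0; exact: ltW.
  exact: ler_wpM2l.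
have lk : (l <= k)%N by rewrite -ltnS ltn_ord.
pose m := (k - l)%N.
have mk : (m <= k)%N by rewrite /m leq_subr.
have := chain m mk.
have -> : (inord (k - m) : 'I_k.+1) = l.
  by apply: val_inj; rewrite /= /m subKn // inordK // ltnS.
move=> hc.
have mT0 : 0 <= m%:R * T by apply: mulr_ge0 => //; exact: ltW.
have mkT : m%:R * T <= k%:R * T by apply: ler_wpM2r; [exact: ltW | rewrite ler_nat].
have hd := decay (p l) (m%:R * T) t mT0 (le_trans mkT tk).
have t0 : 0 <= t by lra.
have yl : expR (- a * t) * e0 ^+ m * Y0 <= y (p l) t.
  apply: le_trans hd.
  have -> : expR (- a * t) * e0 ^+ m * Y0 =
      expR (- a * (t - m%:R * T)) * (expR (- a * (m%:R * T)) * e0 ^+ m * Y0).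
    rewrite (_ : - a * t = - a * (t - m%:R * T) + - a * (m%:R * T)); last by ring.
    rewrite expRD; ring.
  by apply: ler_wpM2l => //; exact: expR_ge0.
rewrite -[(N%:R - 1) / N%:R]/a.
set eta := mu * T / (N%:R + mu * T).
have muT : 0 < mu * T by apply: mulr_gt0.
have eta0 : 0 <= eta by rewrite /eta divr_ge0 //; lra.
have eta1 : eta <= 1 by rewrite /eta ler_pdivrMr; lra.
have etae : eta <= e0.
  rewrite /eta /e0; apply: ler_wpM2l; first lra.
  by rewrite lef_pV2 ?posrE //; lra.
have h1 : eta ^+ k <= e0 ^+ m.
  apply: (@le_trans _ _ (eta ^+ m)); first exact: ler_wiXn2l.
  by apply: lerXn2r; rewrite ?nnegrE //; lra.
have h2 : expR (- 2 * a * t) <= expR (- a * t).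
  by rewrite ler_expR; have := a_gt0; nra.
have h3 : eta ^+ k * expR (- 2 * a * t) <= e0 ^+ m * expR (- a * t).
  by apply: ler_pM => //; try exact: exprn_ge0; try exact: expR_ge0.
have h4 : eta ^+ k * expR (- 2 * a * t) * Y0 <= e0 ^+ m * expR (- a * t) * Y0.
  exact: ler_wpM2r.
have E : e0 ^+ m * expR (- a * t) * Y0 = expR (- a * t) * e0 ^+ m * Y0 by ring.
rewrite /Y0 /y in h4 E yl.
lra.
Qed.

End Main.

Theorem proposition6 (R : realType) (N : nat) (T mu : R)
  (M : 'I_N -> 'I_N -> R -> R) (x : 'I_N -> R -> R) (alpha : R)
  (k : nat) (p : 'I_k.+1 -> 'I_N) :
  (2 <= N)%N -> 0 < T -> 0 < mu ->
  (forall i j, measurable_fun `[(0:R), +oo[ (M i j)) ->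
  (forall i j s, 0 <= s -> 0 <= M i j s <= 1) ->
  caratheodory_solution M x ->
  (exists j, x j 0 = alpha) -> (forall j, alpha <= x j 0) ->
  (1 <= k)%N ->
  injective p ->
  (forall (m : nat) (l : 'I_k.+1), (m < k)%N -> (l < k)%N ->
     conn_arrow M T mu (m%:R * T) (p l) (p (inord l.+1))) ->
  forall t : R, k%:R * T <= t -> forall l : 'I_k.+1,
    x (p l) t >= alpha + (mu * T / (N%:R + mu * T)) ^+ k
                 * expR (- 2 * ((N%:R - 1) / N%:R) * t)
                 * (x (p ord_max) 0 - alpha).
Proof.
move=> hN T0 mu0 hmeas hM01 hsol _ halpha k1 pinj harr.
exact: (@main_sec R N M x alpha hN hmeas hM01 hsol halpha T mu k p T0 mu0 k1 pinj harr).
Qed.
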